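(* Let $p_1<p_2<\dots<p_N$ be positive prime numbers and set $k_i=\sqrt{p_i}$ for $i=1,\dots,N$. For $i\neq j$ define the function $\tilde A_{ij}(x)=\cos((k_i-k_j)x)$ of $x\in\mathbb{R}$, whose (fundamental) period is $t_{ij}=2\pi/|k_i-k_j|$. Let $(i,j)$ and $(i',j')$ be index pairs with $i>j$, $i'>j'$ and $\{i,j\}\neq\{i',j'\}$, and let $t_1=t_{ij}$, $t_2=t_{i'j'}$. Then there exist no nonzero integers $n_1,n_2$ such that $n_1t_1=n_2t_2$.
   Context: The functions $\tilde A_{ij}(x)$ are the entries of $\mathbf{Z}\mathbf{Z}^\top$ where $\mathbf{Z}\in\mathbb{R}^{N\times 2}$ has $i$-th row $(\cos(k_ix),\sin(k_ix))$. *)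

(* Defs.v *)
From Stdlib Require Import Reals ZArith Znumtheory.
Open Scope R_scope.

(* k_i = sqrt(p_i) for a family of primes p : nat -> nat (indices 0-based). *)
Definition kk (p : nat -> nat) (i : nat) : R := sqrt (INR (p i)).

Definition Atilde (p : nat -> nat) (i j : nat) (x : R) : R :=
  cos ((kk p i - kk p j) * x).

Definition tper (p : nat -> nat) (i j : nat) : R :=
  2 * PI / Rabs (kk p i - kk p j).

(* Main.v *)
Require Import Defs.
From Stdlib Require Import Reals ZArith Znumtheory Lia Lra.
Open Scope R_scope.

From Stdlib Require Import Reals ZArith Znumtheory Lia Lra.
Open Scope Z_scope.

Lemma descent (m p : Z) : prime p -> (p | m) -> ~ (p * p | m) ->
  forall n : nat, forall u v, Z.abs v < Z.of_nat n -> u * u = m * v * v -> v = 0.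
Proof.
  intros Hp Hpm Hpp n. induction n as [|n IH]; intros u v Hv E; [lia|].
  destruct (Z.eq_dec v 0) as [|Hv0]; [assumption|exfalso].
  pose proof (prime_ge_2 _ Hp) as H2.
  destruct Hpm as [m1 Hm1]. subst m.
  assert (Hu : (p | u)).
  { assert (H : (p | u * u)) by (rewrite E; exists (m1 * v * v); ring).
    destruct (prime_mult _ Hp _ _ H); assumption. }
  destruct Hu as [k Hk]. subst u.
  assert (E2 : k * k * p = m1 * v * v).
  { apply (Z.mul_cancel_r _ _ p); [lia|].
    transitivity (k * p * (k * p)); [ring|]. rewrite E. ring. }
  assert (Hm1 : ~ (p | m1)).
  { intros [q Hq]. apply Hpp. exists q. subst. ring. }
  assert (Hvv : (p | v)).
  { assert (H : (p | m1 * (v * v))) by (rewrite Z.mul_assoc, <- E2; exists (k*k); ring).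
    destruct (prime_mult _ Hp _ _ H) as [H'|H']; [contradiction|].
    destruct (prime_mult _ Hp _ _ H'); assumption. }
  destruct Hvv as [w Hw]. subst v.
  assert (E3 : k * k = m1 * p * w * w).
  { apply (Z.mul_cancel_r _ _ p); [lia|]. rewrite E2. ring. }
  assert (w = 0).
  { apply (IH k w); [|exact E3]. assert (w <> 0) by (intro; subst; lia). nia. }
  subst. lia.
Qed.

Lemma notsq (m p : Z) : prime p -> (p | m) -> ~ (p * p | m) ->
  forall u v, u * u = m * v * v -> v = 0.
Proof.
  intros Hp Hpm Hpp u v E. apply (descent m p Hp Hpm Hpp (S (Z.abs_nat v)) u v); [lia|exact E].
Qed.
Open Scope R_scope.

Definition S (a : Z) := sqrt (IZR a).

Lemma S_sq a : (0 <= a)%Z -> S a * S a = IZR a.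
Proof. intro. unfold S. apply sqrt_sqrt. apply IZR_le. lia. Qed.
Lemma S_pos a : prime a -> 0 < S a.
Proof. intro H. pose proof (prime_ge_2 _ H). unfold S. apply sqrt_lt_R0. apply IZR_lt. lia. Qed.
Lemma S_mul a b : (0 <= a)%Z -> (0 <= b)%Z -> S (a * b) = S a * S b.
Proof. intros. unfold S. rewrite mult_IZR. apply sqrt_mult; apply IZR_le; lia. Qed.

Lemma irr (m p : Z) : prime p -> (p | m) -> ~ (p * p | m)%Z -> (0 <= m)%Z ->
  forall u v, S m * IZR v = IZR u -> v = 0%Z.
Proof.
  intros Hp H1 H2 H0 u v E. apply (notsq m p Hp H1 H2 u v).
  apply eq_IZR. rewrite !mult_IZR. rewrite <- E, <- (S_sq m H0). ring.
Qed.

Lemma dp_ndiv a b : prime a -> prime b -> a <> b -> ~ (a | b).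
Proof. intros Ha Hb Hab H. apply Hab. apply prime_div_prime; auto. Qed.

Lemma nsq (a m : Z) : prime a -> ~ (a | m) -> ~ (a * a | a * m)%Z.
Proof.
  intros Ha Hm H. apply Hm. pose proof (prime_ge_2 _ Ha).
  apply (Z.mul_divide_cancel_l _ _ a); [lia|exact H].
Qed.

Lemma two a b A B : prime a -> prime b -> a <> b ->
  IZR A * S a + IZR B * S b = 0 -> A = 0%Z /\ B = 0%Z.
Proof.
  intros Ha Hb Hab E. pose proof (prime_ge_2 _ Ha). pose proof (prime_ge_2 _ Hb).
  assert (B = 0%Z).
  { apply (irr (a * b) a Ha) with (u := (- (A * a))%Z).
    - exists b. ring.
    - apply nsq; auto. apply dp_ndiv; auto.
    - lia.
    - rewrite S_mul by lia. rewrite opp_IZR, mult_IZR, <- (S_sq a) by lia.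
      transitivity (S a * (IZR B * S b)); [ring|].
      replace (IZR B * S b) with (- (IZR A * S a)) by lra. ring. }
  subst. split; auto. apply eq_IZR. pose proof (S_pos a Ha).
  rewrite Rmult_0_l, Rplus_0_r in E. apply Rmult_eq_reg_r with (S a); lra.
Qed.

Lemma three a b c A B C : prime a -> prime b -> prime c -> a <> b -> a <> c -> b <> c ->
  IZR A * S a + IZR B * S b + IZR C * S c = 0 -> A = 0%Z /\ B = 0%Z /\ C = 0%Z.
Proof.
  intros Ha Hb Hc Hab Hac Hbc E.
  pose proof (prime_ge_2 _ Ha). pose proof (prime_ge_2 _ Hb). pose proof (prime_ge_2 _ Hc).
  assert (HZ : (2 * A * B = 0)%Z).
  { apply (irr (a * b) a Ha) with (u := (C*C*c - A*A*a - B*B*b)%Z).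
    - exists b. ring.
    - apply nsq; auto. apply dp_ndiv; auto.
    - lia.
    - rewrite S_mul by lia. rewrite !minus_IZR, !mult_IZR, <- (S_sq a), <- (S_sq b), <- (S_sq c) by lia.
      replace (IZR C * IZR C * (S c * S c)) with ((IZR C * S c) * (IZR C * S c)) by ring.
      replace (IZR C * S c) with (- (IZR A * S a + IZR B * S b)) by lra. ring. }
  assert (A = 0%Z \/ B = 0%Z) as [HA|HB] by lia.
  - subst. rewrite Rmult_0_l, Rplus_0_l in E. destruct (two b c B C Hb Hc Hbc E). auto.
  - subst. rewrite Rmult_0_l, Rplus_0_r in E. destruct (two a c A C Ha Hc Hac E). auto.
Qed.

Lemma four a b c d A B C D : prime a -> prime b -> prime c -> prime d ->
  a <> b -> a <> c -> a <> d -> b <> c -> b <> d -> c <> d ->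
  IZR A * S a + IZR B * S b + IZR C * S c + IZR D * S d = 0 -> A = 0%Z.
Proof.
  intros Ha Hb Hc Hd Hab Hac Had Hbc Hbd Hcd E.
  pose proof (prime_ge_2 _ Ha). pose proof (prime_ge_2 _ Hb).
  pose proof (prime_ge_2 _ Hc). pose proof (prime_ge_2 _ Hd).
  set (r := (C*C*c + D*D*d - A*A*a - B*B*b)%Z).
  assert (E1 : S a * S b * IZR (2*A*B) - S c * S d * IZR (2*C*D) = IZR r).
  { unfold r. rewrite !minus_IZR, !plus_IZR, !mult_IZR, <- (S_sq a), <- (S_sq b), <- (S_sq c), <- (S_sq d) by lia.
    replace (IZR C * IZR C * (S c * S c) + IZR D * IZR D * (S d * S d))
      with ((IZR C * S c + IZR D * S d) * (IZR C * S c + IZR D * S d) - 2 * (IZR C * S c) * (IZR D * S d)) by ring.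
    replace (IZR C * S c + IZR D * S d) with (- (IZR A * S a + IZR B * S b)) by lra. ring. }
  assert (HZ : (8 * A * B * C * D = 0)%Z).
  { apply (irr (a * (b * c * d)) a Ha) with (u := (4*A*A*B*B*a*b + 4*C*C*D*D*c*d - r*r)%Z).
    - exists (b*c*d)%Z. ring.
    - apply nsq; auto. intro H'.
      destruct (prime_mult _ Ha _ _ H') as [H''|H''].
      + destruct (prime_mult _ Ha _ _ H'') as [H3|H3]; revert H3; apply dp_ndiv; auto.
      + revert H''; apply dp_ndiv; auto.
    - nia.
    - rewrite !S_mul by nia.
      rewrite !minus_IZR, !plus_IZR, !mult_IZR, <- (S_sq a), <- (S_sq b), <- (S_sq c), <- (S_sq d) by lia.
      rewrite <- E1. rewrite !mult_IZR. ring. }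
  assert (A = 0%Z \/ B = 0%Z \/ C = 0%Z \/ D = 0%Z) as [HA|[HB|[HC|HD]]] by lia; auto; subst.
  - assert (E' : IZR A * S a + IZR C * S c + IZR D * S d = 0) by lra.
    destruct (three _ _ _ _ _ _ Ha Hc Hd Hac Had Hcd E'); auto.
  - assert (E' : IZR A * S a + IZR B * S b + IZR D * S d = 0) by lra.
    destruct (three _ _ _ _ _ _ Ha Hb Hd Hab Had Hbd E'); auto.
  - assert (E' : IZR A * S a + IZR B * S b + IZR C * S c = 0) by lra.
    destruct (three _ _ _ _ _ _ Ha Hb Hc Hab Hac Hbc E'); auto.
Qed.
Open Scope R_scope.
Lemma kkS p k : kk p k = S (Z.of_nat (p k)).
Proof. unfold kk, S. rewrite INR_IZR_INZ. reflexivity. Qed.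

Theorem lemma1 (N : nat) (p : nat -> nat)
  (Hprime : forall i, (i < N)%nat -> prime (Z.of_nat (p i)))
  (Hinc : forall i j, (i < j)%nat -> (j < N)%nat -> (p i < p j)%nat)
  (i j i' j' : nat)
  (Hi : (i < N)%nat) (Hi' : (i' < N)%nat)
  (Hij : (j < i)%nat) (Hij' : (j' < i')%nat)
  (Hdiff : (i, j) <> (i', j')) :
  ~ (exists n1 n2 : Z, n1 <> 0%Z /\ n2 <> 0%Z /\
       IZR n1 * tper p i j = IZR n2 * tper p i' j').
Proof.
  intros [n1 [n2 [Hn1 [Hn2 E]]]].
  assert (Hd : forall k l, (k < N)%nat -> (l < N)%nat -> k <> l -> Z.of_nat (p k) <> Z.of_nat (p l)).
  { intros k l Hk Hl Hkl. destruct (Nat.lt_gt_cases k l) as [[H|H] _]; [exact Hkl| |];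
    [pose proof (Hinc k l H Hl)|pose proof (Hinc l k H Hk)]; lia. }
  assert (Hlt : forall k l, (k < l)%nat -> (l < N)%nat -> kk p k < kk p l).
  { intros k l Hkl Hl. unfold kk. apply sqrt_lt_1; try apply pos_INR.
    apply lt_INR. apply Hinc; auto. }
  pose proof (Hlt j i Hij Hi) as L1. pose proof (Hlt j' i' Hij' Hi') as L2.
  unfold tper in E. rewrite !Rabs_pos_eq in E by lra.
  assert (PI > 0) by exact PI_RGT_0.
  assert (key : IZR n1 * (kk p i' - kk p j') = IZR n2 * (kk p i - kk p j)).
  { apply Rmult_eq_reg_r with (2 * PI / ((kk p i - kk p j) * (kk p i' - kk p j'))).
    - transitivity (IZR n1 * (2 * PI / (kk p i - kk p j))); [field; lra|].
      rewrite E. field; lra.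
    - apply Rgt_not_eq. apply Rdiv_lt_0_compat; [lra|]. apply Rmult_lt_0_compat; lra. }
  rewrite !kkS in key.
  assert (Pr : forall k, (k < N)%nat -> prime (Z.of_nat (p k))) by exact Hprime.
  assert (Hj : (j < N)%nat) by lia. assert (Hj' : (j' < N)%nat) by lia.
  destruct (Nat.eq_dec i i') as [e1|e1]; [subst i'|];
  [ assert (j <> j') by (intro; subst; apply Hdiff; reflexivity);
    assert (E' : IZR (-n1) * S (Z.of_nat (p j')) + IZR (n1 - n2) * S (Z.of_nat (p i))
                 + IZR n2 * S (Z.of_nat (p j)) = 0)
      by (rewrite opp_IZR, minus_IZR; lra);
    destruct (three _ _ _ _ _ _ (Pr j' Hj') (Pr i Hi) (Pr j Hj)
               (Hd _ _ Hj' Hi ltac:(lia)) (Hd _ _ Hj' Hj ltac:(lia)) (Hd _ _ Hi Hj ltac:(lia)) E');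
    lia
  | ].
  destruct (Nat.eq_dec j j') as [e2|e2]; [subst j'|].
  { assert (E' : IZR n1 * S (Z.of_nat (p i')) + IZR (- n2) * S (Z.of_nat (p i))
                 + IZR (n2 - n1) * S (Z.of_nat (p j)) = 0)
      by (rewrite opp_IZR, minus_IZR; lra).
    destruct (three _ _ _ _ _ _ (Pr i' Hi') (Pr i Hi) (Pr j Hj)
               (Hd _ _ Hi' Hi ltac:(lia)) (Hd _ _ Hi' Hj ltac:(lia)) (Hd _ _ Hi Hj ltac:(lia)) E').
    lia. }
  destruct (Nat.eq_dec i j') as [e3|e3]; [subst j'|].
  { assert (E' : IZR n1 * S (Z.of_nat (p i')) + IZR (- n1 - n2) * S (Z.of_nat (p i))
                 + IZR n2 * S (Z.of_nat (p j)) = 0)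
      by (rewrite minus_IZR, opp_IZR; lra).
    destruct (three _ _ _ _ _ _ (Pr i' Hi') (Pr i Hi) (Pr j Hj)
               (Hd _ _ Hi' Hi ltac:(lia)) (Hd _ _ Hi' Hj ltac:(lia)) (Hd _ _ Hi Hj ltac:(lia)) E').
    lia. }
  destruct (Nat.eq_dec j i') as [e4|e4]; [subst i'|].
  { assert (E' : IZR (- n1) * S (Z.of_nat (p j')) + IZR (- n2) * S (Z.of_nat (p i))
                 + IZR (n1 + n2) * S (Z.of_nat (p j)) = 0)
      by (rewrite plus_IZR, !opp_IZR; lra).
    destruct (three _ _ _ _ _ _ (Pr j' Hj') (Pr i Hi) (Pr j Hj)
               (Hd _ _ Hj' Hi ltac:(lia)) (Hd _ _ Hj' Hj ltac:(lia)) (Hd _ _ Hi Hj ltac:(lia)) E').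
    lia. }
  assert (E' : IZR n1 * S (Z.of_nat (p i')) + IZR (- n1) * S (Z.of_nat (p j'))
               + IZR (- n2) * S (Z.of_nat (p i)) + IZR n2 * S (Z.of_nat (p j)) = 0)
    by (rewrite !opp_IZR; lra).
  apply Hn1.
  apply (four _ _ _ _ _ _ _ _ (Pr i' Hi') (Pr j' Hj') (Pr i Hi) (Pr j Hj)
    (Hd _ _ Hi' Hj' ltac:(lia)) (Hd _ _ Hi' Hi ltac:(lia)) (Hd _ _ Hi' Hj ltac:(lia))
    (Hd _ _ Hj' Hi ltac:(lia)) (Hd _ _ Hj' Hj ltac:(lia)) (Hd _ _ Hi Hj ltac:(lia)) E').
Qed.
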